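(* Let $K,L$ be compact Hausdorff spaces and suppose there are continuous maps $e\colon L\to K$ and $r\colon K\to L$ with $r\circ e=\mathrm{Id}_L$. If $C(K)$ has the ball fixed point property, then $C(L)$ has the ball fixed point property.
   Context: $C(K)$ is the real Banach space of continuous functions on compact $K$ with the sup norm. A real Banach space $X$ has the ball fixed point property (BFPP) if every nonexpansive map $T\colon B_X\to B_X$ (i.e. $\|Tx-Ty\|\le\|x-y\|$) has a fixed point, where $B_X$ is the closed unit ball. *)

(* Defs.v *)
From HB Require Import structures.
From mathcomp Require Import all_boot all_order all_algebra.
From mathcomp Require Import all_classical all_reals all_analysis.
Set Implicit Arguments. Unset Strict Implicit. Unset Printing Implicit Defensive.
Import Order.TTheory GRing.Theory Num.Theory.
Import numFieldNormedType.Exports.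
Local Open Scope classical_set_scope.
Local Open Scope ring_scope.

Definition in_CK {R : realType} {K : topologicalType} (f : K -> R) : Prop :=
  continuous f.

(* sup norm ||f||_oo = sup_{x in K} |f x| (sup of empty set is 0 in mathcomp) *)
Definition supnorm {R : realType} {K : topologicalType} (f : K -> R) : R :=
  sup (range (fun x => `|f x|)).

Definition in_unit_ball {R : realType} {K : topologicalType} (f : K -> R) : Prop :=
  in_CK f /\ supnorm f <= 1.

Definition CK_BFPP (R : realType) (K : topologicalType) : Prop :=
  forall T : (K -> R) -> (K -> R),
    (forall f, in_unit_ball f -> in_unit_ball (T f)) ->
    (forall f g, in_unit_ball f -> in_unit_ball g ->
        supnorm (T f - T g) <= supnorm (f - g)) ->
    exists2 f, in_unit_ball f & T f = f.

(* Main.v *)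
Require Import Defs.
From HB Require Import structures.
From mathcomp Require Import all_boot all_order all_algebra.
From mathcomp Require Import all_classical all_reals all_analysis.
Import Order.TTheory GRing.Theory Num.Theory.
Import numFieldNormedType.Exports.
Local Open Scope classical_set_scope.
Local Open Scope ring_scope.

Lemma cont_bnd (R : realType) (K : topologicalType) (cK : compact [set: K]) (f : K -> R) :
  continuous f -> has_ubound (range (fun x => `|f x|)).
Proof.
move=> cf.
have cg : continuous (fun x => `|f x|).
  by move=> x; apply: continuous_comp; [exact: cf| exact: norm_continuous].
have := continuous_compact (A := [set: K]) (continuous_subspaceT cg) cK.
move=> /compact_bounded [M [_ HM]].
exists (M + 1) => y [x _ <-].
have hM : M < M + 1 by rewrite ltrDl ltr01.
have := HM (M + 1) hM (`|f x|) (ex_intro2 _ _ x I erefl).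
by move=> /= h; rewrite -[X in X <= _]ger0_norm.
Qed.

Lemma supnorm_surj (R : realType) (K L : topologicalType) (e : L -> K) (r : K -> L)
  (re : r \o e = id) (g : L -> R) : supnorm (g \o r) = supnorm g.
Proof.
rewrite /supnorm; congr sup; apply/seteqP; split => y [x _ <-].
  by exists (r x).
by exists (e x) => //=; have := congr1 (fun h => h x) re => /= ->.
Qed.

Lemma supnorm_ge0 (R : realType) (K : topologicalType) (f : K -> R) :
  has_ubound (range (fun x => `|f x|)) -> 0 <= supnorm f.
Proof.
move=> hb; have [[k _]|nk] := pselect (exists k : K, True).
  apply: le_trans (normr_ge0 (f k)) _; apply: ub_le_sup => //; by exists k.
rewrite /supnorm.
have -> : range (fun x => `|f x|) = set0.
  by apply/seteqP; split => y // [x _ _]; apply: nk; exists x.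
by rewrite sup0.
Qed.

Lemma supnorm_comp_le (R : realType) (K L : topologicalType) (e : L -> K) (f : K -> R) :
  has_ubound (range (fun x => `|f x|)) -> supnorm (f \o e) <= supnorm f.
Proof.
move=> hb; have [[l _]|nl] := pselect (exists l : L, True).
  apply: ge_sup; first by exists `|f (e l)|, l.
  move=> y [x _ <-]; apply: ub_le_sup => //; by exists (e x).
rewrite /supnorm.
have -> : range (fun x => `|(f \o e) x|) = set0.
  by apply/seteqP; split => y // [x _ _]; apply: nl; exists x.
by rewrite sup0; exact: supnorm_ge0.
Qed.

Theorem mainTheorem12 (R : realType) (K L : topologicalType)
  (hK : hausdorff_space K) (cK : compact [set: K])
  (hL : hausdorff_space L) (cL : compact [set: L])
  (e : L -> K) (r : K -> L) (ce : continuous e) (cr : continuous r)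
  (re : r \o e = id) :
  CK_BFPP R K -> CK_BFPP R L.
Proof.
move=> BK T Tball Tne.
have ballE : forall f : K -> R, in_unit_ball f -> in_unit_ball (f \o e).
  move=> f [cf nf]; split.
    by move=> x; apply: continuous_comp; [exact: ce | exact: cf].
  by apply: le_trans nf; apply: supnorm_comp_le; exact: cont_bnd.
have ballR : forall g : L -> R, in_unit_ball g -> in_unit_ball (g \o r).
  move=> g [cg ng]; split.
    by move=> x; apply: continuous_comp; [exact: cr | exact: cg].
  by rewrite (@supnorm_surj R _ _ _ _ re).
have NE : forall f g : K -> R, in_unit_ball f -> in_unit_ball g ->
  supnorm ((T (f \o e) \o r) - (T (g \o e) \o r)) <= supnorm (f - g).
move=> f g hf hg.
have -> : (T (f \o e) \o r) - (T (g \o e) \o r) = (T (f \o e) - T (g \o e)) \o r by apply/funext => x.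
rewrite (@supnorm_surj R _ _ _ _ re).
apply: le_trans (Tne _ _ (ballE _ hf) (ballE _ hg)) _.
have -> : (f \o e) - (g \o e) = (f - g) \o e by apply/funext => x.
apply: supnorm_comp_le; apply: cont_bnd => //.
by move=> x; apply: continuousB; [exact: hf.1 | exact: hg.1].
have [f fb hfix] := BK (fun f => T (f \o e) \o r)
  (fun f hf => ballR _ (Tball _ (ballE _ hf))) NE.
exists (f \o e); first exact: ballE.
rewrite -[in RHS]hfix /=.
by rewrite -[in RHS]compA re.
Qed.
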